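(* For each of the following sets $\mathcal S\subseteq\{0,1\}^3$, and for every set obtained from it by any sequence of coordinate negations and coordinate permutations, $\rho(\mathcal S)=1$: $\{000,001\}$, $\{000,001,110\}$, $\{000,001,110,111\}$, $\{000,011,101\}$, $\{000,011,101,110\}$.
   Context: Binary triples $(x_1,x_2,x_3)\in\{0,1\}^3$ are written $x_1x_2x_3$. Let $\mathcal S\subseteq\{0,1\}^3$ be nonempty. A distribution scheme with domain $\mathcal S$ is a pair $(P_R,\psi)$ where $P_R$ is a probability distribution on a finite set $\mathcal R$ and $\psi:\mathcal S\times\mathcal R\to\mathcal W_{12}\times\mathcal W_{23}\times\mathcal W_{31}$ for finite share alphabets. Given $\mathbf x=(x_1,x_2,x_3)\in\mathcal S$, the shares are $(W_{12},W_{23},W_{31})=\psi(\mathbf x,R)$, $R\sim P_R$. Party $P_1$ sees $V_1=(W_{12},W_{31})$, $P_2$ sees $V_2=(W_{23},W_{12})$, $P_3$ sees $V_3=(W_{31},W_{23})$. It is a 3SS scheme if (Correctness) for each $i$ there is a function $\phi_i$ with $\Pr[\phi_i(V_i)=x_i]=1$ for every $\mathbf x\in\mathcal S$, and (Perfect privacy) for each $i$ and all $\mathbf x,\mathbf x'\in\mathcal S$ with $x_i=x'_i$, $V_i$ has the same distribution under secret $\mathbf x$ as under $\mathbf x'$. The randomness complexity $\rho(\mathcal S)$ is the minimum of $\log_2|\mathcal R|$ over all 3SS schemes with domain $\mathcal S$. A coordinate negation maps $\mathcal S$ to $\{\mathbf x\oplus e_i:\mathbf x\in\mathcal S\}$;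 a coordinate permutation permutes the three coordinates of every element. *)

(* Defs.v *)
From Stdlib Require Import Reals.
From mathcomp Require Import all_boot all_order all_algebra all_fingroup.
From mathcomp Require Import Rstruct.

Set Implicit Arguments.
Unset Strict Implicit.
Unset Printing Implicit Defensive.

Import GRing.Theory Num.Theory.

(* Binary triples x1x2x3 : coordinate i is x i, with i : 'I_3
   (party P_1 <-> index 0, P_2 <-> index 1, P_3 <-> index 2). *)
Definition triple := {ffun 'I_3 -> bool}.

Definition mk3 (b1 b2 b3 : bool) : triple :=
  [ffun i : 'I_3 => nth false [:: b1; b2; b3] i].

Section Schemes.
Local Open Scope ring_scope.

Definition is_distribution (Rt : finType) (P : Rt -> R) : Prop :=
  (forall r, 0 <= P r) /\ \sum_(r : Rt) P r = 1.

Definition view1 (W12 W23 W31 : Type) (w : W12 * W23 * W31) : W12 * W31 :=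
  (w.1.1, w.2).
Definition view2 (W12 W23 W31 : Type) (w : W12 * W23 * W31) : W23 * W12 :=
  (w.1.2, w.1.1).
Definition view3 (W12 W23 W31 : Type) (w : W12 * W23 * W31) : W31 * W23 :=
  (w.2, w.1.2).

Definition correct_for (S : {set triple}) (Rt : finType) (P : Rt -> R)
    (W : Type) (V : eqType) (psi : triple -> Rt -> W) (f : W -> V)
    (i : 'I_3) : Prop :=
  exists phi : V -> bool,
    forall x, x \in S -> \sum_(r : Rt | phi (f (psi x r)) == x i) P r = 1.

Definition private_for (S : {set triple}) (Rt : finType) (P : Rt -> R)
    (W : Type) (V : eqType) (psi : triple -> Rt -> W) (f : W -> V)
    (i : 'I_3) : Prop :=
  forall x x', x \in S -> x' \in S -> x i = x' i ->
    forall v : V, \sum_(r : Rt | f (psi x r) == v) P r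
                = \sum_(r : Rt | f (psi x' r) == v) P r.

Definition is_3SS (S : {set triple}) (Rt : finType) (P : Rt -> R)
    (W12 W23 W31 : finType) (psi : triple -> Rt -> W12 * W23 * W31) : Prop :=
  is_distribution P /\
  correct_for S P psi (@view1 W12 W23 W31) ord0 /\
  correct_for S P psi (@view2 W12 W23 W31) (inord 1) /\
  correct_for S P psi (@view3 W12 W23 W31) (inord 2) /\
  private_for S P psi (@view1 W12 W23 W31) ord0 /\
  private_for S P psi (@view2 W12 W23 W31) (inord 1) /\
  private_for S P psi (@view3 W12 W23 W31) (inord 2).

End Schemes.

Definition has_3SS_with_rand (S : {set triple}) (n : nat) : Prop :=
  exists (Rt W12 W23 W31 : finType) (P : Rt -> R)
         (psi : triple -> Rt -> W12 * W23 * W31),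
    is_3SS S P psi /\ #|Rt| = n.

Definition log2 (x : R) : R := (ln x / ln 2)%R.

Definition rho_is (S : {set triple}) (k : R) : Prop :=
  (exists n, has_3SS_with_rand S n /\ log2 (INR n) = k) /\
  (forall n, has_3SS_with_rand S n -> (k <= log2 (INR n))%R).

Definition negate_coord (i : 'I_3) (S : {set triple}) : {set triple} :=
  [set [ffun j => if j == i then ~~ x j else x j] | x : triple in S].

Definition permute_coords (s : 'S_3) (S : {set triple}) : {set triple} :=
  [set [ffun j => x (s j)] | x : triple in S].

Inductive equiv_reach (S0 : {set triple}) : {set triple} -> Prop :=
  | reach_refl : equiv_reach S0 S0
  | reach_neg : forall i S, equiv_reach S0 S -> equiv_reach S0 (negate_coord i S)
  | reach_perm : forall s S, equiv_reach S0 S -> equiv_reach S0 (permute_coords s S).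

Definition S_a : {set triple} :=
  [set mk3 false false false; mk3 false false true].
Definition S_b : {set triple} :=
  [set mk3 false false false; mk3 false false true; mk3 true true false].
Definition S_c : {set triple} :=
  [set mk3 false false false; mk3 false false true; mk3 true true false;
       mk3 true true true].
Definition S_d : {set triple} :=
  [set mk3 false false false; mk3 false true true; mk3 true false true].
Definition S_e : {set triple} :=
  [set mk3 false false false; mk3 false true true; mk3 true false true;
       mk3 true true false].

(* Main.v *)
Require Import Defs.
From Stdlib Require Import Reals Lra.
From mathcomp Require Import all_boot all_algebra all_fingroup.
From mathcomp Require Import Rstruct.
Import GRing.Theory Num.Theory.


Lemma ord3_cases (k : 'I_3) : k = ord0 \/ k = inord 1 \/ k = inord 2.
Proof.
case: k => [[|[|[|k]]]] Hk.
- by left; apply: val_inj.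
- by right; left; apply: val_inj; rewrite /= inordK.
- by right; right; apply: val_inj; rewrite /= inordK.
- by [].
Qed.
Lemma n10 : (inord 1 : 'I_3) != ord0. Proof. by apply/eqP => /(congr1 val); rewrite /= inordK. Qed.
Lemma n20 : (inord 2 : 'I_3) != ord0. Proof. by apply/eqP => /(congr1 val); rewrite /= inordK. Qed.
Lemma n21 : (inord 2 : 'I_3) != inord 1. Proof. by apply/eqP => /(congr1 val); rewrite /= !inordK. Qed.
Lemma n01 : (ord0 : 'I_3) != inord 1. Proof. by rewrite eq_sym n10. Qed.
Lemma n02 : (ord0 : 'I_3) != inord 2. Proof. by rewrite eq_sym n20. Qed.
Lemma n12 : (inord 1 : 'I_3) != inord 2. Proof. by rewrite eq_sym n21. Qed.

Definition bad1 (S : {set triple}) :=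
  exists x y k, [/\ x \in S, y \in S, x k != y k & forall j, j != k -> x j = y j].
Definition bad2 (S : {set triple}) :=
  exists x y z (a b c : 'I_3), [/\ x \in S, y \in S & z \in S] /\ [/\ a != b, b != c & a != c]
    /\ [/\ x a = y a, x b = z b, y c = z c & x b != y b].

Section CoreSec.
Variables (S : {set triple}) (A B C : Type).
Variables (f12 : triple -> A) (f23 : triple -> B) (f31 : triple -> C).
Hypothesis h1 : forall x y, x \in S -> y \in S -> x ord0 = y ord0 -> f12 x = f12 y /\ f31 x = f31 y.
Hypothesis h2 : forall x y, x \in S -> y \in S -> x (inord 1) = y (inord 1) -> f23 x = f23 y /\ f12 x = f12 y.
Hypothesis h3 : forall x y, x \in S -> y \in S -> x (inord 2) = y (inord 2) -> f31 x = f31 y /\ f23 x = f23 y.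
Hypothesis c1 : forall x y, x \in S -> y \in S -> f12 x = f12 y -> f31 x = f31 y -> x ord0 = y ord0.
Hypothesis c2 : forall x y, x \in S -> y \in S -> f23 x = f23 y -> f12 x = f12 y -> x (inord 1) = y (inord 1).
Hypothesis c3 : forall x y, x \in S -> y \in S -> f31 x = f31 y -> f23 x = f23 y -> x (inord 2) = y (inord 2).

Ltac sat u v Hu Hv :=
  try (have [? ?] := h1 u v Hu Hv ltac:(done));
  try (have [? ?] := h2 u v Hu Hv ltac:(done));
  try (have [? ?] := h3 u v Hu Hv ltac:(done)).

Ltac fin x y Hx Hy Hne :=
  move/eqP: Hne; apply;
  first [ apply: (c1 x y Hx Hy); congruence
        | apply: (c2 x y Hx Hy); congruence
        | apply: (c3 x y Hx Hy); congruence ].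

Lemma core1 : ~ bad1 S.
Proof.
move=> [x [y [k [Hx Hy Hne Hj]]]].
case: (ord3_cases k) => [->|[->|->]] in Hne Hj *.
- have e1 := Hj _ n10; have e2 := Hj _ n20. sat x y Hx Hy. fin x y Hx Hy Hne.
- have e1 := Hj _ n01; have e2 := Hj _ n21. sat x y Hx Hy. fin x y Hx Hy Hne.
- have e1 := Hj _ n02; have e2 := Hj _ n12. sat x y Hx Hy. fin x y Hx Hy Hne.
Qed.

Lemma core2 : ~ bad2 S.
Proof.
move=> [x [y [z [a [b [c [[Hx Hy Hz] [[Hab Hbc Hac] [E1 E2 E3 Hne]]]]]]]]].
case: (ord3_cases a) => [Ea|[Ea|Ea]]; subst a;
case: (ord3_cases b) => [Eb|[Eb|Eb]]; subst b;
case: (ord3_cases c) => [Ec|[Ec|Ec]]; subst c;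
rewrite ?eqxx // in Hab Hbc Hac;
sat x y Hx Hy; sat x z Hx Hz; sat y z Hy Hz; fin x y Hx Hy Hne.
Qed.
End CoreSec.


Definition N (i : 'I_3) (x : triple) : triple := [ffun j => if j == i then ~~ x j else x j].
Definition Pm (s : 'S_3) (x : triple) : triple := [ffun j => x (s j)].

Lemma NE i x y j : (N i x j == N i y j) = (x j == y j).
Proof. by rewrite !ffunE; case: (j == i); case: (x j); case: (y j). Qed.
Lemma NE' i x y j : (N i x j = N i y j) <-> (x j = y j).
Proof. by rewrite !ffunE; case: (j == i); case: (x j); case: (y j). Qed.
Lemma PmE s x j : Pm s x (s^-1 j)%g = x j.
Proof. by rewrite ffunE permKV. Qed.

Lemma N_mem i (S : {set triple}) x : x \in S -> N i x \in negate_coord i S.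
Proof. by move=> Hx; apply/imsetP; exists x. Qed.
Lemma Pm_mem s (S : {set triple}) x : x \in S -> Pm s x \in permute_coords s S.
Proof. by move=> Hx; apply/imsetP; exists x. Qed.

Lemma bad1_N i S : bad1 S -> bad1 (negate_coord i S).
Proof.
move=> [x [y [k [Hx Hy Hne Hj]]]]; exists (N i x), (N i y), k; split.
- exact: N_mem. - exact: N_mem. - by rewrite NE.
- by move=> j /Hj /NE'.
Qed.
Lemma bad2_N i S : bad2 S -> bad2 (negate_coord i S).
Proof.
move=> [x [y [z [a [b [c [[Hx Hy Hz] [Hd [E1 E2 E3 Hne]]]]]]]]].
exists (N i x), (N i y), (N i z), a, b, c; split; first by split; apply: N_mem.
split => //; split; try (by apply/NE'); by rewrite NE.
Qed.
Lemma bad1_P s S : bad1 S -> bad1 (permute_coords s S).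
Proof.
move=> [x [y [k [Hx Hy Hne Hj]]]]; exists (Pm s x), (Pm s y), (s^-1 k)%g; split.
- exact: Pm_mem. - exact: Pm_mem. - by rewrite !PmE.
- move=> j Hjk; rewrite !ffunE; apply: Hj; apply: contra Hjk => /eqP <-.
  by rewrite permK.
Qed.
Lemma bad2_P s S : bad2 S -> bad2 (permute_coords s S).
Proof.
move=> [x [y [z [a [b [c [[Hx Hy Hz] [[Hab Hbc Hac] [E1 E2 E3 Hne]]]]]]]]].
exists (Pm s x), (Pm s y), (Pm s z), (s^-1 a)%g, (s^-1 b)%g, (s^-1 c)%g; split; first by split; apply: Pm_mem.
by rewrite !(inj_eq (@perm_inj _ _)) !PmE.
Qed.

Definition par (x : triple) := x ord0 (+) x (inord 1) (+) x (inord 2).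

Lemma par_big (x : triple) : \big[addb/false]_(j < 3) x j = par x.
Proof.
rewrite !big_ord_recl big_ord0 /par addbF addbA.
have -> : lift ord0 ord0 = inord 1 :> 'I_3 by apply: val_inj; rewrite /= inordK.
by have -> : lift ord0 (lift ord0 ord0) = inord 2 :> 'I_3 by apply: val_inj; rewrite /= inordK.
Qed.

Lemma par_P s x : par (Pm s x) = par x.
Proof.
rewrite -!par_big (reindex_inj (@perm_inj _ s^-1)%g).
by apply: eq_bigr => j _; rewrite PmE.
Qed.

Lemma par_N i x : par (N i x) = ~~ par x.
Proof.
rewrite /par !ffunE.
case: (ord3_cases i) => [->|[->|->]]; rewrite ?eqxx ?(negbTE n10) ?(negbTE n20) ?(negbTE n21) ?(negbTE n01) ?(negbTE n02) ?(negbTE n12);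
by case: (x ord0); case: (x (inord 1)); case: (x (inord 2)).
Qed.

Definition covered (S : {set triple}) :=
  (exists (i j : 'I_3) c, i != j /\ S \subset [set x : triple | x i (+) x j == c])
  \/ (exists c, S \subset [set x : triple | par x == c]).

Lemma cov_N k S : covered S -> covered (negate_coord k S).
Proof.
case=> [[i [j [c [Hij Hs]]]] | [c Hs]].
- left; exists i, j, (c (+) (i == k) (+) (j == k)); split => //.
  apply/subsetP => _ /imsetP [x Hx ->]; move/subsetP: Hs => /(_ x Hx).
  rewrite !inE !ffunE => /eqP <-.
  by case: (i == k); case: (j == k); case: (x i); case: (x j).
- right; exists (~~ c); apply/subsetP => _ /imsetP [x Hx ->].
  move/subsetP: Hs => /(_ x Hx); rewrite !inE -/(N k x) par_N => /eqP ->.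
  by [].
Qed.

Lemma cov_P s S : covered S -> covered (permute_coords s S).
Proof.
case=> [[i [j [c [Hij Hs]]]] | [c Hs]].
- left; exists (s^-1 i)%g, (s^-1 j)%g, c; split; first by rewrite (inj_eq (@perm_inj _ _)).
  apply/subsetP => _ /imsetP [x Hx ->]; move/subsetP: Hs => /(_ x Hx).
  by rewrite !inE -/(Pm s x) !PmE.
- right; exists c; apply/subsetP => _ /imsetP [x Hx ->].
  by move/subsetP: Hs => /(_ x Hx); rewrite !inE -/(Pm s x) par_P.
Qed.

Section DetS.
Local Open Scope ring_scope.

Lemma sum1 (Rt : finType) (r0 : Rt) (H : forall r, r = r0) (p : pred Rt) (F : Rt -> R) :
  \sum_(r | p r) F r = if p r0 then F r0 else 0.
Proof. by rewrite big_mkcond (big_pred1 r0) // => r; rewrite /= (H r) eqxx. Qed.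

Lemma no_rand1 S : bad1 S \/ bad2 S -> ~ has_3SS_with_rand S 1.
Proof.
move=> Hb [Rt [W12 [W23 [W31 [P [psi [[[_ Hd] [[p1 C1] [[p2 C2] [[p3 C3] [P1 [P2 P3]]]]]] Hc]]]]]]].
have [r0 Hr0] := fintype1 Hc.
have HP : P r0 = 1 by rewrite -Hd (@sum1 _ r0 Hr0 predT).
have corr : forall (V : eqType) (f : W12 * W23 * W31 -> V) i phi,
   (forall x, x \in S -> \sum_(r | phi (f (psi x r)) == x i) P r = 1) ->
   forall x, x \in S -> phi (f (psi x r0)) = x i.
  move=> V f i phi HC x Hx; have := HC x Hx; rewrite (@sum1 _ r0 Hr0) HP.
  by case: eqP => // _ /eqP; rewrite eq_sym oner_eq0.
have priv : forall (V : eqType) (f : W12 * W23 * W31 -> V) i,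
   private_for S P psi f i ->
   forall x x', x \in S -> x' \in S -> x i = x' i -> f (psi x r0) = f (psi x' r0).
  move=> V f i HP' x x' Hx Hx' Ei; have := HP' x x' Hx Hx' Ei (f (psi x r0)).
  rewrite !(@sum1 _ r0 Hr0) HP eqxx; case: eqP => // _ /eqP; rewrite oner_eq0 //.
have k1 := corr _ _ _ _ C1; have k2 := corr _ _ _ _ C2; have k3 := corr _ _ _ _ C3.
have q1 := priv _ _ _ P1; have q2 := priv _ _ _ P2; have q3 := priv _ _ _ P3.
case: Hb; [apply: (@core1 S _ _ _ (fun x => (psi x r0).1.1) (fun x => (psi x r0).1.2) (fun x => (psi x r0).2))
 | apply: (@core2 S _ _ _ (fun x => (psi x r0).1.1) (fun x => (psi x r0).1.2) (fun x => (psi x r0).2))].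
all: try (by move=> x y Hx Hy E; have := q1 x y Hx Hy E; rewrite /view1 => -[-> ->]).
all: try (by move=> x y Hx Hy E; have := q2 x y Hx Hy E; rewrite /view2 => -[-> ->]).
all: try (by move=> x y Hx Hy E; have := q3 x y Hx Hy E; rewrite /view3 => -[-> ->]).
all: try (by move=> x y Hx Hy E1 E2; rewrite -(k1 x Hx) -(k1 y Hy) /view1 E1 E2).
all: try (by move=> x y Hx Hy E1 E2; rewrite -(k2 x Hx) -(k2 y Hy) /view2 E1 E2).
all: try (by move=> x y Hx Hy E1 E2; rewrite -(k3 x Hx) -(k3 y Hy) /view3 E1 E2).
Qed.

End DetS.

Section SchS.
Local Open Scope ring_scope.

Definition half : R := GRing.inv (GRing.add (GRing.one R) (GRing.one R)).

Lemma shift_sum (V : eqType) (g h : bool -> V) (t : bool) :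
  (forall r, g (r (+) t) = h r) ->
  forall v, \sum_(r : bool | g r == v) half = \sum_(r : bool | h r == v) half.
Proof.
move=> H v; rewrite (reindex_inj (@addbI t)).
by apply: eq_bigl => r /=; rewrite addbC H.
Qed.

Lemma all_sum (p : pred bool) : (forall r, p r) -> \sum_(r : bool | p r) half = 1.
Proof.
move=> H; rewrite (eq_bigl predT) // big_bool /= /half.
have h : (1 + 1 : R) != 0 by rewrite lt0r_neq0 // addr_gt0 // ltr01.
by rewrite -{1 2}[(1+1)^-1]mul1r -mulrDl mulfV.
Qed.

Section MK.
Variables (T : {set triple}) (psi : triple -> bool -> bool * bool * bool).
Variables (phi1 phi2 phi3 : bool * bool -> bool).
Hypothesis k1 : forall x r, x \in T -> phi1 (view1 (psi x r)) = x ord0.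
Hypothesis k2 : forall x r, x \in T -> phi2 (view2 (psi x r)) = x (inord 1).
Hypothesis k3 : forall x r, x \in T -> phi3 (view3 (psi x r)) = x (inord 2).
Hypothesis q1 : forall x x', x \in T -> x' \in T -> x ord0 = x' ord0 ->
  exists t, forall r, view1 (psi x (r (+) t)) = view1 (psi x' r).
Hypothesis q2 : forall x x', x \in T -> x' \in T -> x (inord 1) = x' (inord 1) ->
  exists t, forall r, view2 (psi x (r (+) t)) = view2 (psi x' r).
Hypothesis q3 : forall x x', x \in T -> x' \in T -> x (inord 2) = x' (inord 2) ->
  exists t, forall r, view3 (psi x (r (+) t)) = view3 (psi x' r).

Lemma mk_scheme : has_3SS_with_rand T 2.
Proof.
exists bool, bool, bool, bool, (fun _ => half), psi; split; last by rewrite card_bool.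
split; first by split; [move=> _; rewrite /half invr_ge0 addr_ge0 // ler01 | apply: all_sum].
split; first by exists phi1 => x Hx; apply: all_sum => r; rewrite k1.
split; first by exists phi2 => x Hx; apply: all_sum => r; rewrite k2.
split; first by exists phi3 => x Hx; apply: all_sum => r; rewrite k3.
split; first by move=> x x' Hx Hx' E; have [t Ht] := q1 x x' Hx Hx' E; apply: shift_sum Ht.
split; first by move=> x x' Hx Hx' E; have [t Ht] := q2 x x' Hx Hx' E; apply: shift_sum Ht.
by move=> x x' Hx Hx' E; have [t Ht] := q3 x x' Hx Hx' E; apply: shift_sum Ht.
Qed.
End MK.

Lemma sub_scheme (S T : {set triple}) n : S \subset T -> has_3SS_with_rand T n -> has_3SS_with_rand S n.
Proof.
move=> /subsetP ST [Rt [W12 [W23 [W31 [P [psi [[Hd [[p1 C1] [[p2 C2] [[p3 C3] [P1 [P2 P3]]]]]] Hc]]]]]]].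
exists Rt, W12, W23, W31, P, psi; split => //.
split => //; split; first by exists p1; move=> x /ST; apply: C1.
split; first by exists p2; move=> x /ST; apply: C2.
split; first by exists p3; move=> x /ST; apply: C3.
split; first by move=> x x' /ST Hx /ST Hx'; apply: P1.
split; first by move=> x x' /ST Hx /ST Hx'; apply: P2.
by move=> x x' /ST Hx /ST Hx'; apply: P3.
Qed.

Ltac kb x r c := rewrite ?inE /view1 /view2 /view3 /=;
  case: c; case: (x ord0); case: (x (inord 1)); case: (x (inord 2)); case: r.
Ltac qb x x' r c Hx Hx' E := move: Hx Hx' E; rewrite ?inE /view1 /view2 /view3 /=;
  case: c; case: (x ord0); case: (x (inord 1)); case: (x (inord 2));
  case: (x' ord0); case: (x' (inord 1)); case: (x' (inord 2)); case: r.

Lemma sch01 c : has_3SS_with_rand [set x : triple | x ord0 (+) x (inord 1) == c] 2.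
Proof.
apply: (@mk_scheme _ (fun x r => (x ord0, r (+) x (inord 2), r))
  (fun w => w.1) (fun w => w.2 (+) c) (fun w => w.1 (+) w.2)).
- by move=> x r; kb x r c.
- by move=> x r; kb x r c.
- by move=> x r; kb x r c.
- by move=> x x' Hx Hx' E; exists false => r; qb x x' r c Hx Hx' E.
- by move=> x x' Hx Hx' E; exists (x (inord 2) (+) x' (inord 2)) => r; qb x x' r c Hx Hx' E.
- by move=> x x' Hx Hx' E; exists false => r; qb x x' r c Hx Hx' E.
Qed.

Lemma sch12 c : has_3SS_with_rand [set x : triple | x (inord 1) (+) x (inord 2) == c] 2.
Proof.
apply: (@mk_scheme _ (fun x r => (r, x (inord 1), r (+) x ord0))
  (fun w => w.1 (+) w.2) (fun w => w.1) (fun w => w.2 (+) c)).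
- by move=> x r; kb x r c.
- by move=> x r; kb x r c.
- by move=> x r; kb x r c.
- by move=> x x' Hx Hx' E; exists false => r; qb x x' r c Hx Hx' E.
- by move=> x x' Hx Hx' E; exists false => r; qb x x' r c Hx Hx' E.
- by move=> x x' Hx Hx' E; exists (x ord0 (+) x' ord0) => r; qb x x' r c Hx Hx' E.
Qed.

Lemma sch20 c : has_3SS_with_rand [set x : triple | x (inord 2) (+) x ord0 == c] 2.
Proof.
apply: (@mk_scheme _ (fun x r => (r, r (+) x (inord 1), x (inord 2)))
  (fun w => w.2 (+) c) (fun w => w.1 (+) w.2) (fun w => w.1)).
- by move=> x r; kb x r c.
- by move=> x r; kb x r c.
- by move=> x r; kb x r c.
- by move=> x x' Hx Hx' E; exists false => r; qb x x' r c Hx Hx' E.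
- by move=> x x' Hx Hx' E; exists false => r; qb x x' r c Hx Hx' E.
- by move=> x x' Hx Hx' E; exists (x (inord 1) (+) x' (inord 1)) => r; qb x x' r c Hx Hx' E.
Qed.

Lemma schpar c : has_3SS_with_rand [set x : triple | par x == c] 2.
Proof.
apply: (@mk_scheme _ (fun x r => (r, r (+) x (inord 1), r (+) x ord0))
  (fun w => w.1 (+) w.2) (fun w => w.1 (+) w.2) (fun w => w.1 (+) w.2 (+) c)).
- by move=> x r; rewrite inE /par; kb x r c.
- by move=> x r; rewrite inE /par; kb x r c.
- by move=> x r; rewrite inE /par; kb x r c.
- by move=> x x' Hx Hx' E; exists false => r; rewrite !inE /par in Hx Hx'; qb x x' r c Hx Hx' E.
- by move=> x x' Hx Hx' E; exists false => r; rewrite !inE /par in Hx Hx'; qb x x' r c Hx Hx' E.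
- by move=> x x' Hx Hx' E; exists (x ord0 (+) x' ord0) => r; rewrite !inE /par in Hx Hx'; qb x x' r c Hx Hx' E.
Qed.

Lemma cov_scheme S : covered S -> has_3SS_with_rand S 2.
Proof.
case=> [[i [j [c [Hij Hs]]]] | [c Hs]]; last by apply: sub_scheme Hs (schpar c).
case: (ord3_cases i) => [Ei|[Ei|Ei]]; subst i;
case: (ord3_cases j) => [Ej|[Ej|Ej]]; subst j; rewrite ?eqxx // in Hij.
- exact: sub_scheme Hs (sch01 c).
- apply: sub_scheme (sch20 c); apply: subset_trans Hs _; apply/subsetP => x; rewrite !inE addbC //.
- apply: sub_scheme (sch01 c); apply: subset_trans Hs _; apply/subsetP => x; rewrite !inE addbC //.
- exact: sub_scheme Hs (sch12 c).
- exact: sub_scheme Hs (sch20 c).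
- apply: sub_scheme (sch12 c); apply: subset_trans Hs _; apply/subsetP => x; rewrite !inE addbC //.
Qed.

End SchS.

Section MnS.
Local Open Scope R_scope.

Lemma ln2_pos : (0 < ln 2).
Proof. have := ln_lt_2; lra. Qed.

Lemma log2_2 : log2 (INR 2) = IZR 1.
Proof.
change (log2 (INR 2)) with (ln (INR 2) * / ln 2).
replace (INR 2) with 2 by (simpl; lra).
apply: Rinv_r; have := ln2_pos; lra.
Qed.

Lemma log2_ge n : (2 <= n)%nat -> (IZR 1 <= log2 (INR n)).
Proof.
move=> Hn; change (log2 (INR n)) with (ln (INR n) * / ln 2).
have H2 : (2 <= INR n).
  replace 2 with (INR 2) by (simpl; lra); apply: le_INR; apply/leP.
  exact Hn.
have Hl : (ln 2 <= ln (INR n)).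
  case: (Rle_lt_or_eq_dec _ _ H2) => [Hlt|<-]; last lra.
  apply: Rlt_le; apply: ln_increasing => //; lra.
have hp := ln2_pos.
rewrite -(Rinv_r (ln 2)); last lra.
apply: Rmult_le_compat_r => //; apply: Rlt_le; exact: Rinv_0_lt_compat.
Qed.

Lemma no_rand0 S : ~ has_3SS_with_rand S 0.
Proof.
move=> [Rt [W12 [W23 [W31 [P [psi [[[_ Hd] _] Hc]]]]]]].
move: Hd; rewrite big1; last by move=> r _; have := card0_eq Hc r; rewrite inE.
by move/eqP; rewrite eq_sym GRing.oner_eq0.
Qed.

Lemma rho_good S : (bad1 S \/ bad2 S) -> covered S -> rho_is S (IZR 1).
Proof.
move=> Hb Hc; split.
  by exists 2%nat; split; [exact: cov_scheme | exact: log2_2].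
move=> n Hn; apply/RleP.
case: n Hn => [|[|n]] Hn.
- by case: (@no_rand0 S Hn).
- by case: (@no_rand1 S Hb Hn).
- exact: log2_ge.
Qed.

End MnS.


Lemma mk0 a b c : mk3 a b c ord0 = a. Proof. by rewrite ffunE. Qed.
Lemma mk1 a b c : mk3 a b c (inord 1) = b. Proof. by rewrite ffunE inordK. Qed.
Lemma mk2 a b c : mk3 a b c (inord 2) = c. Proof. by rewrite ffunE inordK. Qed.

Ltac memb := let H := fresh "H" in move=> H; repeat (case/orP: H => H);
  by move/eqP: H => ->; rewrite /par ?mk0 ?mk1 ?mk2.

Lemma base S0 : S0 \in [:: S_a; S_b; S_c; S_d; S_e] -> (bad1 S0 \/ bad2 S0) /\ covered S0.
Proof.
rewrite !inE => /orP [/eqP->|/orP [/eqP->|/orP [/eqP->|/orP [/eqP->|/eqP->]]]].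
- split; last (left; exists ord0, (inord 1), false; split; [exact: n01 | apply/subsetP => x; rewrite !inE; memb]).
  left; exists (mk3 false false false), (mk3 false false true), (inord 2); split.
  + by rewrite !inE eqxx.
  + by rewrite !inE eqxx orbT.
  + by rewrite !mk2.
  + by move=> j; case: (ord3_cases j) => [->|[->|->]]; rewrite ?eqxx ?mk0 ?mk1.
- split; last (left; exists ord0, (inord 1), false; split; [exact: n01 | apply/subsetP => x; rewrite !inE; memb]).
  left; exists (mk3 false false false), (mk3 false false true), (inord 2); split.
  + by rewrite !inE eqxx.
  + by rewrite !inE eqxx !orbT.
  + by rewrite !mk2.
  + by move=> j; case: (ord3_cases j) => [->|[->|->]]; rewrite ?eqxx ?mk0 ?mk1.
- split; last (left; exists ord0, (inord 1), false; split; [exact: n01 | apply/subsetP => x; rewrite !inE; memb]).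
  left; exists (mk3 false false false), (mk3 false false true), (inord 2); split.
  + by rewrite !inE eqxx.
  + by rewrite !inE eqxx !orbT.
  + by rewrite !mk2.
  + by move=> j; case: (ord3_cases j) => [->|[->|->]]; rewrite ?eqxx ?mk0 ?mk1.
- split; last (right; exists false; apply/subsetP => x; rewrite !inE; memb).
  right; exists (mk3 false false false), (mk3 false true true), (mk3 true false true), ord0, (inord 1), (inord 2).
  split; first by split; rewrite !inE eqxx ?orbT.
  split; first by split; [exact: n01 | exact: n12 | exact: n02].
  by rewrite !mk0 !mk1 !mk2.
- split; last (right; exists false; apply/subsetP => x; rewrite !inE; memb).
  right; exists (mk3 false false false), (mk3 false true true), (mk3 true false true), ord0, (inord 1), (inord 2).
  split; first by split; rewrite !inE eqxx ?orbT.
  split; first by split; [exact: n01 | exact: n12 | exact: n02].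
  by rewrite !mk0 !mk1 !mk2.
Qed.

Theorem mainTheorem7 :
  forall S0 : {set triple}, S0 \in [:: S_a; S_b; S_c; S_d; S_e] ->
  forall S : {set triple}, equiv_reach S0 S -> rho_is S (IZR 1).
Proof.
move=> S0 H0 S HS.
suff [Hb Hc] : (bad1 S \/ bad2 S) /\ covered S by exact: rho_good.
elim: HS => [|i S' _ [Hb Hc]|s S' _ [Hb Hc]]; first exact: base.
- split; last exact: cov_N.
  by case: Hb => H; [left; apply: bad1_N | right; apply: bad2_N].
- split; last exact: cov_P.
  by case: Hb => H; [left; apply: bad1_P | right; apply: bad2_P].
Qed.
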